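(* Let $q$ be a prime, let $c\in\mathbb{F}_q$, let $a_1,a_2,a_3\in\mathbb{F}_q\setminus\{0\}$, and let $\gamma_1,\gamma_2,\gamma_3$ be permutations of $\mathbb{F}_q$. If $\gamma_1(x_1)+\gamma_2(x_2)+\gamma_3(x_3)=c$ for all $x_1,x_2,x_3\in\mathbb{F}_q$ satisfying $a_1x_1+a_2x_2+a_3x_3=0$, then each $\gamma_i$ ($i=1,2,3$) is an affine transformation of $\mathbb{F}_q$, i.e. of the form $x\mapsto ux+w$ with $u,w\in\mathbb{F}_q$. *)

(* Defs.v *)
From mathcomp Require Import all_boot all_order all_algebra all_fingroup.
Set Implicit Arguments. Unset Strict Implicit. Unset Printing Implicit Defensive.
Import GRing.Theory.
Local Open Scope ring_scope.

Definition affine_map (F : pzRingType) (f : F -> F) : Prop :=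
  exists u w : F, forall x : F, f x = u * x + w.

(* Main.v *)
Require Import Defs.
From mathcomp Require Import all_boot all_order all_algebra all_fingroup.
From mathcomp Require Import ring.
Import GRing.Theory.
Local Open Scope ring_scope.

Lemma Fp_natr q (x : 'F_q) : x = (val x)%:R.
Proof. apply/val_inj. by rewrite /= Zp_nat /= modn_small. Qed.

Lemma additive_lin q (f : 'F_q -> 'F_q)
  (hf : forall x y, f (x + y) = f x + f y) : forall x, f x = x * f 1.
Proof.
have f0 : f 0 = 0.
  by have := hf 0 0; rewrite addr0 => /eqP; rewrite -subr_eq subrr eq_sym => /eqP.
move=> x; rewrite (@Fp_natr q x); elim: (val x) => [|n IH]; first by rewrite mul0r f0.
by rewrite -natr1 hf IH mulrDl mul1r.
Qed.

Theorem lemma4 (q : nat) (hq : prime q) (c a1 a2 a3 : 'F_q)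
  (ha1 : a1 != 0) (ha2 : a2 != 0) (ha3 : a3 != 0)
  (g1 g2 g3 : {perm 'F_q})
  (H : forall x1 x2 x3 : 'F_q, a1 * x1 + a2 * x2 + a3 * x3 = 0 ->
         g1 x1 + g2 x2 + g3 x3 = c) :
  affine_map (g1 : 'F_q -> 'F_q) /\ affine_map (g2 : 'F_q -> 'F_q)
  /\ affine_map (g3 : 'F_q -> 'F_q).
Proof.
pose h1 (y : 'F_q) := g1 (y / a1). pose h2 (y : 'F_q) := g2 (y / a2). pose h3 (y : 'F_q) := g3 (y / a3).
have Hh : forall y1 y2, h1 y1 + h2 y2 + h3 (- (y1 + y2)) = c.
  move=> y1 y2; apply: H.
  by rewrite (mulrC a1) (mulrC a2) (mulrC a3) !divfK // subrr.
pose f (y : 'F_q) := h1 y - h1 0.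
have hf : forall x y, f (x + y) = f x + f y.
  move=> x y; rewrite /f.
  have e1 := Hh x y. have e2 := Hh (x + y) 0. have e3 := Hh 0 y.
  rewrite addr0 in e2. rewrite add0r in e3.
  have e4 : h1 x + h2 y = h1 (x + y) + h2 0.
    by apply/(addIr (h3 (- (x + y)))); rewrite e1 e2.
  have e5 : h1 0 + h2 y = h1 y + h2 0.
    by apply/(addIr (h3 (- y))); rewrite e3; have := Hh y 0; rewrite addr0.
  have -> : h1 (x + y) = h1 x + h2 y - h2 0 by rewrite e4 addrK.
  have -> : h2 y = h1 y + h2 0 - h1 0 by rewrite -e5 addrC addKr.
  ring.
have lin := @additive_lin q f hf.
have eh1 : forall y, h1 y = y * f 1 + h1 0 by move=> y; rewrite -lin /f subrK.
have eh2 : forall y, h2 y = y * f 1 + h2 0.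
  move=> y; have := Hh 0 y; have := Hh y 0; rewrite add0r addr0 => e3 e4.
  have : h1 0 + h2 y = h1 y + h2 0 by apply/(addIr (h3 (- y))); rewrite e4 e3.
  by rewrite (eh1 y) => e; apply/(addrI (h1 0)); rewrite e; ring.
have eh3 : forall y, h3 y = y * f 1 + (c - h1 0 - h2 0).
  move=> y; have := Hh (- y) 0; rewrite addr0 opprK eh1 => e.
  rewrite -e; ring.
split; last split.
- exists (a1 * f 1), (h1 0) => x.
  have e : a1 * x / a1 = x by rewrite mulrC mulKf.
  by have := eh1 (a1 * x); rewrite /h1 e => ->; ring.
- exists (a2 * f 1), (h2 0) => x.
  have e : a2 * x / a2 = x by rewrite mulrC mulKf.
  by have := eh2 (a2 * x); rewrite /h2 e => ->; ring.
- exists (a3 * f 1), (c - h1 0 - h2 0) => x.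
  have e : a3 * x / a3 = x by rewrite mulrC mulKf.
  by have := eh3 (a3 * x); rewrite /h3 e => ->; ring.
Qed.
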